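(* Let $q(m,n)=am^2+bmn+cn^2$ with $a,b,c\in\mathbb{Z}$ be a positive definite form ($\Delta=b^2-4ac<0$, $a>0$) and let $\lambda>0$. For $k\in\mathbb{Z}$ let $A_k=\{(m,n)\in(\mathbb{Z}\setminus\{0\})\times\mathbb{Z}: q(m,n)=k\}$. Then there is a constant $C_{\lambda,\Delta}$ depending only on $\lambda$ and $\Delta$ such that for every $k\in\mathbb{Z}$, $$\sum_{(m,n)\in A_k}\frac{1}{|m|^{\lambda}}\le C_{\lambda,\Delta}.$$ *)

(* Defs.v *)
From Stdlib Require Import Reals ZArith List.
Open Scope R_scope.

Definition qform (a b c m n : Z) : Z := (a*m*m + b*m*n + c*n*n)%Z.

Definition inA (a b c k : Z) (p : Z * Z) : Prop :=
  fst p <> 0%Z /\ qform a b c (fst p) (snd p) = k.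

Definition term (lam : R) (p : Z * Z) : R := / Rpower (Rabs (IZR (fst p))) lam.

Definition sum_terms (lam : R) (l : list (Z * Z)) : R :=
  fold_right (fun p acc => term lam p + acc) 0 l.

(* Main.v *)
Require Import Defs.
From Stdlib Require Import Reals ZArith List Znumtheory Lia Lra.
From mathcomp Require ssreflect ssrfun ssrbool eqtype ssrnat seq path div prime bigop.

Module MC.
Import mathcomp.boot.ssreflect mathcomp.boot.ssrfun mathcomp.boot.ssrbool mathcomp.boot.eqtype mathcomp.boot.ssrnat mathcomp.boot.seq mathcomp.boot.path mathcomp.boot.div mathcomp.boot.prime mathcomp.boot.bigop.

Lemma size_add_divisors f divs : size (PrimeDecompAux.add_divisors f divs) = (f.2.+1 * size divs)%N.
Proof.
case: f => p e /=; rewrite /PrimeDecompAux.add_divisors.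
elim: e => [|e IH] /=; first by rewrite mul1n.
by rewrite size_merge size_cat size_map IH mulSn addnC.
Qed.

Lemma size_divisors n : size (divisors n) = foldr (fun f acc => (f.2.+1 * acc)%N) 1%N (prime_decomp n).
Proof.
rewrite /divisors; elim: (prime_decomp n) => [|f pd IH] //=.
by rewrite size_add_divisors IH.
Qed.

Lemma prod_pd n : (0 < n)%N -> n = foldr (fun f acc => (f.1 ^ f.2 * acc)%N) 1%N (prime_decomp n).
Proof.
move=> /prod_prime_decomp {1}->; elim: (prime_decomp n) => [|f pd IH]; first by rewrite big_nil.
by rewrite big_cons IH.
Qed.

Lemma inP' (s : seq nat) x : (x \in s) <-> List.In x s.
Proof.
elim: s => [|y s IH] //=; rewrite in_cons; split.
- by case/orP => [/eqP ->|/IH]; [left|right].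
- by case=> [->|/IH ->]; rewrite ?eqxx ?orbT.
Qed.

Lemma uniqNoDup (s : seq nat) : uniq s -> List.NoDup s.
Proof.
elim: s => [|y s IH] /=; first by constructor.
case/andP => ny us; constructor; last exact: IH.
by move/inP'; rewrite (negbTE ny).
Qed.

Lemma INR_expn p e : INR (expn p e) = (INR p ^ e)%R.
Proof.
elim: e => [|e IH]; first by rewrite expn0 /=.
by rewrite expnS -multE mult_INR IH /=.
Qed.

Lemma ln_le' x y : (0 < x)%R -> (x <= y)%R -> (ln x <= ln y)%R.
Proof. move=> hx [h|->]; [left; exact: ln_increasing|right; done]. Qed.

Lemma factor_bound1 eps p e : (0 < eps)%R -> (2 <= p)%coq_nat ->
  (INR e.+1 <= (1 + / (eps * ln 2)) * Rpower (INR (expn p e)) eps)%R.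
Proof.
move=> he hp.
have hp2 : (2 <= INR p)%R by apply: (le_INR 2).
have hp0 : (0 < INR p)%R by lra.
rewrite INR_expn /Rpower ln_pow // S_INR.
have hl2 : (0 < ln 2)%R by rewrite -ln_1; apply: ln_increasing; lra.
have hlp : (ln 2 <= ln (INR p))%R by apply: ln_le'; lra.
have he0 : (0 <= INR e)%R by apply: pos_INR.
set x := (eps * (INR e * ln (INR p)))%R.
have h1 := exp_ineq1_le x.
have hx : (eps * INR e * ln 2 <= x)%R.
  rewrite /x. rewrite -Rmult_assoc. apply: Rmult_le_compat_l => //.
  apply: Rmult_le_pos; lra.
have hinv : (0 < / (eps * ln 2))%R by apply: Rinv_0_lt_compat; apply: Rmult_lt_0_compat.
have key : ((/ (eps * ln 2)) * (eps * INR e * ln 2) = INR e)%R.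
  field; split; lra.
nra.
Qed.

Lemma factor_bound2 eps p e : (0 < eps)%R -> (exp (/ eps) <= INR p)%R ->
  (INR e.+1 <= Rpower (INR (expn p e)) eps)%R.
Proof.
move=> he hp.
have hp0 : (0 < INR p)%R by have := exp_pos (/eps); lra.
rewrite INR_expn /Rpower ln_pow // S_INR.
have hlp : (/ eps <= ln (INR p))%R.
  rewrite -(ln_exp (/eps)); apply: ln_le' => //; apply: exp_pos.
have he0 : (0 <= INR e)%R by apply: pos_INR.
have h1 := exp_ineq1_le (eps * (INR e * ln (INR p))).
have : (INR e <= eps * (INR e * ln (INR p)))%R.
  have k1 : (eps * / eps = 1)%R by field; lra.
  have k2 : (1 <= eps * ln (INR p))%R.
    rewrite -k1; apply: Rmult_le_compat_l; lra.
  have : (INR e * 1 <= INR e * (eps * ln (INR p)))%R by apply: Rmult_le_compat_l.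
  lra.
lra.
Qed.

Lemma pd_pos (pd : seq (nat*nat)) : (forall f, f \in pd -> prime f.1) ->
  (0 < foldr (fun f acc => (f.1 ^ f.2 * acc)%N) 1%N pd)%N.
Proof.
elim: pd => [|f pd IH] //= H.
rewrite muln_gt0 expn_gt0 prime_gt0 ?H ?mem_head //= IH // => g hg.
by apply: H; rewrite in_cons hg orbT.
Qed.

Lemma pd_prod eps B P0 (pd : seq (nat*nat)) : (0 < eps)%R -> (1 <= B)%R ->
  (forall p e, (2 <= p)%coq_nat -> (INR e.+1 <= B * Rpower (INR (expn p e)) eps)%R) ->
  (forall p e, (P0 <= p)%N -> (INR e.+1 <= Rpower (INR (expn p e)) eps)%R) ->
  (forall f, f \in pd -> prime f.1) ->
  (INR (foldr (fun f acc => (f.2.+1 * acc)%N) 1%N pd) <=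
   B ^ (size (filter (fun f => (f.1 < P0)%N) pd)) *
   Rpower (INR (foldr (fun f acc => (f.1 ^ f.2 * acc)%N) 1%N pd)) eps)%R.
Proof.
move=> he hB H1 H2.
elim: pd => [|[p e] pd IH] H /=.
  rewrite /= /Rpower ln_1 Rmult_0_r exp_0; lra.
have Hp : prime p by apply: (H (p, e)); rewrite mem_head.
have Hr : forall f, f \in pd -> prime f.1 by move=> g hg; apply: H; rewrite in_cons hg orbT.
have IH' := IH Hr.
have p2 : (2 <= p)%coq_nat by apply/leP; apply: prime_gt1.
have hpos1 : (0 < INR (expn p e))%R by apply: lt_0_INR; apply/ltP; rewrite expn_gt0 prime_gt0.
have hpos2 : (0 < INR (foldr (fun f acc => (f.1 ^ f.2 * acc)%N) 1%N pd))%R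
  by apply: lt_0_INR; apply/ltP; apply: pd_pos.
have mulI : forall a b, INR (muln a b) = (INR a * INR b)%R by move=> a b; rewrite -multE mult_INR.
rewrite !mulI -Rpower_mult_distr //.
have hR1 : (0 <= Rpower (INR (expn p e)) eps)%R by left; apply: exp_pos.
have hR2 : (0 <= Rpower (INR (foldr (fun f acc => (f.1 ^ f.2 * acc)%N) 1%N pd)) eps)%R
  by left; apply: exp_pos.
have hBS : forall k, (0 <= B ^ k)%R by move=> k; apply: pow_le; lra.
case: ifP => hlt /=.
- have := H1 p e p2.
  move=> h1.
  have h0 : (0 <= INR e.+1)%R by apply: pos_INR.
  have h0' : (0 <= INR (foldr (fun f acc => (f.2.+1 * acc)%N) 1%N pd))%R by apply: pos_INR.
  have := Rmult_le_compat _ _ _ _ h0 h0' h1 IH'.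
  move=> hh; apply: (Rle_trans _ _ _ hh); right; ring.
- have h1 : (INR e.+1 <= Rpower (INR (expn p e)) eps)%R by apply: H2; rewrite leqNgt hlt.
  have h0 : (0 <= INR e.+1)%R by apply: pos_INR.
  have h0' : (0 <= INR (foldr (fun f acc => (f.2.+1 * acc)%N) 1%N pd))%R by apply: pos_INR.
  have := Rmult_le_compat _ _ _ _ h0 h0' h1 IH'.
  move=> hh; apply: (Rle_trans _ _ _ hh); right; simpl; ring.
Qed.

Lemma small_count P0 n : (size (filter (fun f => (f.1 < P0)%N) (prime_decomp n)) <= P0)%N.
Proof.
rewrite -(size_map fst).
have -> : map fst [seq f <- prime_decomp n | (f.1 < P0)%N] = [seq p <- primes n | (p < P0)%N]
  by rewrite filter_map.
rewrite -[P0 in (_ <= P0)%N](size_iota 0 P0).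
apply: uniq_leq_size; first by rewrite filter_uniq // primes_uniq.
by move=> x; rewrite mem_filter mem_iota => /andP[h _]; rewrite add0n h.
Qed.

Lemma divisor_bound eps : (0 < eps)%R -> exists C, (0 < C)%R /\
  forall n, (0 < n)%N -> (INR (size (divisors n)) <= C * Rpower (INR n) eps)%R.
Proof.
move=> he.
set B := (1 + / (eps * ln 2))%R.
have hl2 : (0 < ln 2)%R by rewrite -ln_1; apply: ln_increasing; lra.
have hB : (1 <= B)%R.
  have : (0 < / (eps * ln 2))%R by apply: Rinv_0_lt_compat; apply: Rmult_lt_0_compat.
  rewrite /B; lra.
have [P0 HP0] : exists P0 : nat, (exp (/eps) <= INR P0)%R.
  have [hk1 hk2] := archimed (exp (/eps)).
  exists (Z.to_nat (up (exp (/eps)))).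
  have hp := exp_pos (/eps).
  rewrite INR_IZR_INZ Z2Nat.id; first lra.
  apply: le_IZR; lra.
exists (B ^ P0)%R; split; first by apply: pow_lt; lra.
move=> n hn.
rewrite size_divisors {2}(prod_pd n hn).
apply: (Rle_trans _ _ _ (pd_prod _ _ P0 _ he hB _ _ _)).
- by move=> p e hp; apply: factor_bound1.
- move=> p e hp; apply: factor_bound2 => //.
  apply: (Rle_trans _ _ _ HP0); apply: le_INR; exact/leP.
- by move=> [p e] /mem_prime_decomp [].
- apply: Rmult_le_compat_r; first by left; apply: exp_pos.
  apply: Rle_pow => //; apply/leP; apply: small_count.
Qed.

Lemma NoDup_map_inj {A B : Type} (f : A -> B) (l : list A) :
  (forall x y, List.In x l -> List.In y l -> f x = f y -> x = y) -> List.NoDup l -> List.NoDup (List.map f l).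
Proof. by move=> H; apply: List.NoDup_map_NoDup_ForallPairs. Qed.

Definition divsZ (N : Z) : list Z := List.map Z.of_nat (divisors (Z.to_nat N)).

Lemma divsZ_spec N d : (0 < N)%Z -> List.In d (divsZ N) <-> (0 < d)%Z /\ (d | N)%Z.
Proof.
move=> hN; rewrite /divsZ in_map_iff.
have hn : (0 < Z.to_nat N)%N by apply/ltP; lia.
split.
- move=> [x [<- /inP']]; rewrite -dvdn_divisors // => /dvdnP [k hk].
  have hx : (0 < x)%coq_nat.
    case: x hk => [|x] hk; last lia.
    by move: hn; rewrite hk -multE Nat.mul_0_r.
  split; first lia.
  exists (Z.of_nat k); rewrite -(Z2Nat.id N); last lia.
  by rewrite hk -multE Nat2Z.inj_mul.
- move=> [hd [k hk]].
  exists (Z.to_nat d); split; first lia.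
  apply/inP'; rewrite -dvdn_divisors //; apply/dvdnP; exists (Z.to_nat k).
  rewrite hk -multE -Z2Nat.inj_mul; first by [].
  + nia.
  + lia.
Qed.

Lemma divsZ_NoDup N : List.NoDup (divsZ N).
Proof.
rewrite /divsZ; apply: NoDup_map_inj; first by move=> x y _ _; lia.
apply: uniqNoDup; apply: divisors_uniq.
Qed.

Lemma divsZ_bound eps : (0 < eps)%R -> exists C, (0 < C)%R /\
  forall N, (0 < N)%Z -> (INR (List.length (divsZ N)) <= C * Rpower (IZR N) eps)%R.
Proof.
move=> he; have [C [hC H]] := divisor_bound eps he.
exists C; split => // N hN.
rewrite /divsZ List.length_map.
have -> : IZR N = INR (Z.to_nat N) by rewrite INR_IZR_INZ Z2Nat.id //; lia.
by apply: H; apply/ltP; lia.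
Qed.

End MC.
Import MC.

Open Scope Z_scope.

Lemma count_fibers {A K : Type} (dec : forall x y : K, {x = y} + {x <> y})
  (key : A -> K) (KS : list K) (B : nat) : forall (L : list A),
  (forall x, In x L -> In (key x) KS) ->
  (forall k, (length (filter (fun x => if dec (key x) k then true else false) L) <= B)%nat) ->
  (length L <= B * length KS)%nat.
Proof.
induction KS as [|k KS IH]; intros L HL HB.
- destruct L as [|x L]; simpl; [lia|]. destruct (HL x (or_introl eq_refl)).
- pose (f := fun x => if dec (key x) k then true else false).
  rewrite <- (filter_length f L).
  assert (H1 := HB k).
  assert (H2 : (length (filter (fun x => negb (f x)) L) <= B * length KS)%nat).
  { apply IH.
    - intros x Hx. apply filter_In in Hx as [Hx Hf]. unfold f in Hf.
      destruct (HL x Hx) as [E|E]; [|exact E].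
      destruct (dec (key x) k); [discriminate|congruence].
    - intros k'. eapply Nat.le_trans; [|apply (HB k')].
      clear. induction L as [|y L IHL]; simpl; [lia|].
      destruct (negb (f y)); simpl; destruct (dec (key y) k'); simpl; lia. }
  simpl. unfold f in *. lia.
Qed.

Lemma NoDup_map_inj' {A B : Type} (f : A -> B) (l : list A) :
  (forall x y, In x l -> In y l -> f x = f y -> x = y) -> NoDup l -> NoDup (map f l).
Proof. intros H; apply NoDup_map_NoDup_ForallPairs; exact H. Qed.

Lemma inj_length {A B : Type} (f : A -> B) (L : list A) (M : list B) :
  NoDup L -> (forall x, In x L -> In (f x) M) ->
  (forall x y, In x L -> In y L -> f x = f y -> x = y) -> (length L <= length M)%nat.
Proof.
intros HN HM HI. rewrite <- (length_map f L). apply NoDup_incl_length.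
- apply NoDup_map_inj'; assumption.
- intros y Hy. apply in_map_iff in Hy as [x [<- Hx]]. auto.
Qed.

Definition rep (D N : Z) (v : Z * Z) : Prop := snd v * snd v + D * fst v * fst v = N.
Definition prim (D N : Z) (v : Z * Z) : Prop := rep D N v /\ Z.gcd (fst v) (snd v) = 1.

Lemma gcd1_div a m N : (a | N) -> Z.gcd m N = 1 -> Z.gcd a m = 1.
Proof.
intros Ha Hm. apply Z.divide_1_r_nonneg; [apply Z.gcd_nonneg|].
rewrite <- Hm. apply Z.gcd_greatest.
- apply Z.gcd_divide_r.
- eapply Z.divide_trans; [apply Z.gcd_divide_l|exact Ha].
Qed.

Lemma prim_coprime D N v : prim D N v -> Z.gcd (fst v) N = 1.
Proof.
destruct v as [m s]; unfold prim, rep; simpl; intros [HN Hg]. subst N.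
replace (s * s + D * m * m) with (s * s + (D * m) * m) by ring.
rewrite Z.gcd_add_mult_diag_r.
apply Zgcd_1_rel_prime. apply rel_prime_mult; apply Zgcd_1_rel_prime; exact Hg.
Qed.

Lemma gcd_pos a N : 0 < N -> 0 < Z.gcd a N.
Proof.
intros HN. assert (H := Z.gcd_nonneg a N).
destruct (Z.eq_dec (Z.gcd a N) 0) as [E|E]; [|lia].
apply Z.gcd_eq_0 in E; lia.
Qed.

Lemma N_div_g1g2 P Q N : 0 < N -> (N | P * Q) -> (N | Z.gcd P N * Z.gcd Q N).
Proof.
intros HN HPQ.
set (g1 := Z.gcd P N).
assert (Hg1 : 0 < g1) by (apply gcd_pos; exact HN).
assert (E1 : P = g1 * (P / g1)).
{ apply Z.div_exact; [lia|]. apply Z.mod_divide; [lia|]. apply Z.gcd_divide_l. }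
assert (E2 : N = g1 * (N / g1)).
{ apply Z.div_exact; [lia|]. apply Z.mod_divide; [lia|]. apply Z.gcd_divide_r. }
assert (Hc : Z.gcd (P / g1) (N / g1) = 1) by (apply Z.gcd_div_gcd; [lia|reflexivity]).
assert (H1 : (N / g1 | Q)).
{ apply Z.gauss with (P / g1).
  - rewrite E1, E2 in HPQ. rewrite <- Z.mul_assoc in HPQ.
    apply Z.mul_divide_cancel_l in HPQ; [exact HPQ|lia].
  - rewrite Z.gcd_comm; exact Hc. }
assert (H2 : (N / g1 | Z.gcd Q N)).
{ apply Z.gcd_greatest; [exact H1|]. exists g1. rewrite E2 at 1. ring. }
rewrite E2 at 1. apply Z.mul_divide_mono_l. exact H2.
Qed.

Lemma gl g1 g2 W : 0 < g1 -> 0 < g2 -> (g1 | W) -> (g2 | W) -> (g1 * g2 | Z.gcd g1 g2 * W).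
Proof.
intros H1 H2 D1 D2.
set (h := Z.gcd g1 g2).
assert (Hh : 0 < h) by (apply gcd_pos; exact H2).
assert (E1 : g1 = h * (g1 / h)).
{ apply Z.div_exact; [lia|]. apply Z.mod_divide; [lia|]. apply Z.gcd_divide_l. }
assert (E2 : g2 = h * (g2 / h)).
{ apply Z.div_exact; [lia|]. apply Z.mod_divide; [lia|]. apply Z.gcd_divide_r. }
assert (Hc : Z.gcd (g1 / h) (g2 / h) = 1) by (apply Z.gcd_div_gcd; [lia|reflexivity]).
destruct D1 as [w Hw].
assert (Ha : (g2 / h | w)).
{ apply Z.gauss with (g1 / h); [|rewrite Z.gcd_comm; exact Hc].
  apply Z.mul_divide_cancel_l with h; [lia|].
  rewrite <- E2. replace (h * (g1 / h * w)) with W; [exact D2|].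
  rewrite Hw. rewrite E1 at 1. ring. }
destruct Ha as [t Ht].
exists t. rewrite Hw, Ht.
replace (g1 * g2) with (g1 * (h * (g2 / h))) by (rewrite <- E2; reflexivity). ring.
Qed.

Definition Pf (v0 u : Z * Z) := snd u * fst v0 - snd v0 * fst u.
Definition Qf (v0 u : Z * Z) := snd u * fst v0 + snd v0 * fst u.
Definition Wf (vb v : Z * Z) := snd vb * fst v - snd v * fst vb.

Lemma key_div D N v0 vb v : 0 < D -> 0 < N -> prim D N v0 -> prim D N vb -> prim D N v ->
  Z.gcd (Pf v0 vb) N = Z.gcd (Pf v0 v) N -> Z.gcd (Qf v0 vb) N = Z.gcd (Qf v0 v) N ->
  (N | 4 * D * Wf vb v).
Proof.
intros HD HN H0 Hb Hv E1 E2.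
assert (c0 := prim_coprime _ _ _ H0).
assert (cb := prim_coprime _ _ _ Hb).
destruct v0 as [m0 s0], vb as [mb sb], v as [m s].
unfold Pf, Qf, Wf in *; simpl in *.
destruct H0 as [R0 _], Hb as [Rb _], Hv as [Rv _]. unfold rep in *; simpl in *.
set (g1 := Z.gcd (sb * m0 - s0 * mb) N) in *.
set (g2 := Z.gcd (sb * m0 + s0 * mb) N) in *.
set (W := sb * m - s * mb).
assert (p1 : 0 < g1) by (apply gcd_pos; exact HN).
assert (p2 : 0 < g2) by (apply gcd_pos; exact HN).
assert (n1 : (g1 | N)) by apply Z.gcd_divide_r.
assert (n2 : (g2 | N)) by apply Z.gcd_divide_r.
assert (d1 : (g1 | W)).
{ apply Z.gauss with m0; [|apply gcd1_div with N; assumption].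
  replace (m0 * W) with ((sb * m0 - s0 * mb) * m - (s * m0 - s0 * m) * mb) by (unfold W; ring).
  apply Z.divide_sub_r; apply Z.divide_mul_l.
  - apply Z.gcd_divide_l.
  - rewrite E1. apply Z.gcd_divide_l. }
assert (d2 : (g2 | W)).
{ apply Z.gauss with m0; [|apply gcd1_div with N; assumption].
  replace (m0 * W) with ((sb * m0 + s0 * mb) * m - (s * m0 + s0 * m) * mb) by (unfold W; ring).
  apply Z.divide_sub_r; apply Z.divide_mul_l.
  - apply Z.gcd_divide_l.
  - rewrite E2. apply Z.gcd_divide_l. }
set (h := Z.gcd g1 g2).
assert (hN : (h | N)) by (eapply Z.divide_trans; [apply Z.gcd_divide_l|exact n1]).
assert (h4 : (h | 4 * D)).
{ assert (hs : (h | 2 * sb)).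
  { apply Z.gauss with m0; [|apply gcd1_div with N; assumption].
    replace (m0 * (2 * sb)) with ((sb * m0 - s0 * mb) + (sb * m0 + s0 * mb)) by ring.
    apply Z.divide_add_r.
    - eapply Z.divide_trans; [apply Z.gcd_divide_l|apply Z.gcd_divide_l].
    - eapply Z.divide_trans; [apply Z.gcd_divide_r|apply Z.gcd_divide_l]. }
  apply Z.gauss with (mb * mb).
  - replace (mb * mb * (4 * D)) with (4 * N - (2 * sb) * (2 * sb)) by (rewrite <- Rb; ring).
    apply Z.divide_sub_r; [apply Z.divide_mul_r; exact hN|apply Z.divide_mul_l; exact hs].
  - apply Zgcd_1_rel_prime. apply rel_prime_mult; apply Zgcd_1_rel_prime;
      apply gcd1_div with N; assumption. }
assert (Ng : (N | g1 * g2)).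
{ apply N_div_g1g2; [exact HN|].
  exists (m0 * m0 - mb * mb).
  assert (a1 : sb * sb = N - D * mb * mb) by lia.
  assert (a2 : s0 * s0 = N - D * m0 * m0) by lia.
  replace ((sb * m0 - s0 * mb) * (sb * m0 + s0 * mb)) with ((sb * sb) * (m0 * m0) - (s0 * s0) * (mb * mb)) by ring.
  rewrite a1, a2. ring. }
eapply Z.divide_trans; [exact Ng|].
eapply Z.divide_trans; [apply (gl g1 g2 W p1 p2 d1 d2)|].
fold h. apply Z.mul_divide_mono_r. exact h4.
Qed.

Definition Uf (D : Z) (vb v : Z * Z) := snd vb * snd v + D * fst vb * fst v.
Definition Jl (D : Z) := map (fun i => Z.of_nat i - 4 * D) (seq 0 (Z.to_nat (8 * D + 1))).

Lemma Jl_in D j : 0 < D -> -4 * D <= j <= 4 * D -> In j (Jl D).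
Proof.
intros HD Hj. unfold Jl. apply in_map_iff. exists (Z.to_nat (j + 4 * D)). split.
- rewrite Z2Nat.id; lia.
- apply in_seq. lia.
Qed.

Lemma ident D vb v : (Uf D vb v) * (Uf D vb v) + D * (Wf vb v) * (Wf vb v) =
  (snd vb * snd vb + D * fst vb * fst vb) * (snd v * snd v + D * fst v * fst v).
Proof. unfold Uf, Wf. ring. Qed.

Lemma fiber_bound D N vb F : 0 < D -> 0 < N -> prim D N vb -> NoDup F ->
  (forall v, In v F -> prim D N v /\ (N | 4 * D * Wf vb v)) ->
  (length F <= Z.to_nat (8 * D + 1) * 2)%nat.
Proof.
intros HD HN Hb HF HV.
set (f := fun v => ((4 * D * Wf vb v) / N, Z.leb 0 (Uf D vb v))).
assert (Rb : rep D N vb) by apply Hb.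
unfold rep in Rb.
assert (KEY : forall v, In v F -> 4 * D * Wf vb v = fst (f v) * N /\
   Uf D vb v * Uf D vb v + D * Wf vb v * Wf vb v = N * N).
{ intros v Hv. destruct (HV v Hv) as [[Rv _] [k Hk]]. unfold rep in Rv. split.
  - unfold f; cbn [fst]. rewrite Hk. rewrite Z.div_mul; lia.
  - rewrite ident. rewrite Rb, Rv. reflexivity. }
replace (Z.to_nat (8 * D + 1) * 2)%nat with (length (list_prod (Jl D) (true :: false :: nil))).
2:{ rewrite length_prod. unfold Jl. rewrite length_map, length_seq. reflexivity. }
apply (inj_length f); [exact HF| |].
- intros v Hv. destruct (KEY v Hv) as [K1 K2].
  destruct (f v) as [j b] eqn:Ef. cbn [fst] in K1.
  apply in_prod_iff. split.
  + apply Jl_in; [exact HD|].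
    set (W := Wf vb v) in *. set (U := Uf D vb v) in *.
    assert (B1 : D * W * W <= N * N) by nia.
    assert (B2 : j * j * (N * N) = 16 * D * D * (W * W)).
    { replace (j * j * (N * N)) with ((j * N) * (j * N)) by ring. rewrite <- K1. ring. }
    assert (B3 : j * j * (N * N) <= (16 * D) * (N * N)).
    { rewrite B2. replace (16 * D * D * (W * W)) with ((16 * D) * (D * W * W)) by ring.
      apply Z.mul_le_mono_nonneg_l; lia. }
    assert (B4 : j * j <= 16 * D).
    { apply Z.mul_le_mono_pos_r with (N * N); [nia|exact B3]. }
    nia.
  + destruct b; simpl; auto.
- intros v v' Hv Hv' Heq.
  destruct (KEY v Hv) as [K1 K2]. destruct (KEY v' Hv') as [K1' K2'].
  unfold f in Heq. injection Heq as Hj Hs.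
  assert (EW : Wf vb v = Wf vb v').
  { assert (4 * D * Wf vb v = 4 * D * Wf vb v') by (rewrite K1, K1'; unfold f; simpl; rewrite Hj; reflexivity).
    nia. }
  assert (EU : Uf D vb v = Uf D vb v').
  { assert (E2 : Uf D vb v * Uf D vb v = Uf D vb v' * Uf D vb v') by (rewrite EW in K2; lia).
    destruct (Z.leb_spec 0 (Uf D vb v)), (Z.leb_spec 0 (Uf D vb v')); try discriminate; nia. }
  destruct vb as [mb sb], v as [m s], v' as [m' s']. unfold Wf, Uf in *; simpl in *.
  assert (Es : N * s = N * s').
  { rewrite <- Rb.
    replace ((sb * sb + D * mb * mb) * s) with (sb * (sb * s + D * mb * m) - D * mb * (sb * m - s * mb)) by ring.
    rewrite EU, EW. ring. }
  assert (Em : N * m = N * m').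
  { rewrite <- Rb.
    replace ((sb * sb + D * mb * mb) * m) with (mb * (sb * s + D * mb * m) + sb * (sb * m - s * mb)) by ring.
    rewrite EU, EW. ring. }
  apply Z.mul_reg_l in Es; [|lia]. apply Z.mul_reg_l in Em; [|lia]. subst. reflexivity.
Qed.


Definition pz_dec : forall x y : Z * Z, {x = y} + {x <> y}.
Proof. decide equality; apply Z.eq_dec. Defined.

Lemma prim_count D N L : 0 < D -> 0 < N -> NoDup L -> (forall v, In v L -> prim D N v) ->
  (length L <= (Z.to_nat (8 * D + 1) * 2) * (length (divsZ N) * length (divsZ N)))%nat.
Proof.
intros HD HN HL HP.
destruct L as [|v0 L0] eqn:EL; [simpl; lia|].
rewrite <- EL in *.
assert (H0 : prim D N v0) by (apply HP; rewrite EL; left; reflexivity).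
set (key := fun v => (Z.gcd (Pf v0 v) N, Z.gcd (Qf v0 v) N)).
rewrite <- length_prod.
apply (count_fibers pz_dec key).
- intros x Hx. unfold key. apply in_prod_iff. split; apply divsZ_spec; try exact HN;
    split; [apply gcd_pos; exact HN|apply Z.gcd_divide_r|apply gcd_pos; exact HN|apply Z.gcd_divide_r].
- intros k.
  assert (HF : NoDup (filter (fun x => if pz_dec (key x) k then true else false) L))
    by (apply NoDup_filter; exact HL).
  assert (Hin : forall x, In x (filter (fun x => if pz_dec (key x) k then true else false) L) ->
     In x L /\ key x = k).
  { intros x Hx. apply filter_In in Hx as [Hx Hk]. split; [exact Hx|].
    destruct (pz_dec (key x) k); [assumption|discriminate]. }
  destruct (filter (fun x => if pz_dec (key x) k then true else false) L) as [|vb rest] eqn:EF.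
  + simpl; lia.
  + destruct (Hin vb (or_introl eq_refl)) as [Hvb Kb].
    apply fiber_bound with N vb; [exact HD|exact HN|apply HP; exact Hvb|exact HF|].
    intros v Hv. destruct (Hin v Hv) as [Hv' Kv]. split; [apply HP; exact Hv'|].
    apply key_div with v0; auto.
    * rewrite <- Kv in Kb. unfold key in Kb. injection Kb; auto.
    * rewrite <- Kv in Kb. unfold key in Kb. injection Kb; auto.
Qed.

Lemma divsZ_incl N N' : 0 < N -> 0 < N' -> (N' | N) ->
  (length (divsZ N') <= length (divsZ N))%nat.
Proof.
intros HN HN' Hd. apply NoDup_incl_length; [apply divsZ_NoDup|].
intros x Hx. apply divsZ_spec in Hx as [Hx1 Hx2]; [|exact HN'].
apply divsZ_spec; [exact HN|]. split; [exact Hx1|]. eapply Z.divide_trans; eassumption.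
Qed.

Lemma all_count D N L : 0 < D -> 0 < N -> NoDup L -> (forall v, In v L -> rep D N v) ->
  (length L <= ((Z.to_nat (8 * D + 1) * 2) * (length (divsZ N) * length (divsZ N))) * length (divsZ N))%nat.
Proof.
intros HD HN HL HR.
set (key := fun v : Z * Z => Z.gcd (fst v) (snd v)).
apply (count_fibers Z.eq_dec key).
- intros [m s] Hx. unfold key; simpl. assert (Hr := HR _ Hx). unfold rep in Hr; simpl in Hr.
  apply divsZ_spec; [exact HN|]. split.
  + assert (H := Z.gcd_nonneg m s).
    destruct (Z.eq_dec (Z.gcd m s) 0) as [E|E]; [|lia].
    apply Z.gcd_eq_0 in E as [-> ->]. lia.
  + rewrite <- Hr. apply Z.divide_add_r.
    * apply Z.divide_mul_l. apply Z.gcd_divide_r.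
    * apply Z.divide_mul_r. apply Z.gcd_divide_l.
- intros g.
  set (F := filter (fun x => if Z.eq_dec (key x) g then true else false) L).
  assert (HF : NoDup F) by (apply NoDup_filter; exact HL).
  assert (Hin : forall x, In x F -> In x L /\ key x = g).
  { intros x Hx. apply filter_In in Hx as [Hx Hk]. split; [exact Hx|].
    destruct (Z.eq_dec (key x) g); [assumption|discriminate]. }
  clearbody F.
  destruct F as [|v1 rest] eqn:EF; [simpl; lia|].
  rewrite <- EF in *.
  destruct (Hin v1 ltac:(rewrite EF; left; reflexivity)) as [Hv1 K1].
  assert (Hg : 0 < g).
  { rewrite <- K1. unfold key. assert (H := Z.gcd_nonneg (fst v1) (snd v1)).
    destruct (Z.eq_dec (Z.gcd (fst v1) (snd v1)) 0) as [E|E]; [|lia].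
    apply Z.gcd_eq_0 in E as [E1 E2]. assert (Hr := HR _ Hv1). unfold rep in Hr.
    rewrite E1, E2 in Hr. lia. }
  set (N' := N / (g * g)).
  set (nu := fun v : Z * Z => (fst v / g, snd v / g)).
  assert (DEC : forall v, In v F -> fst v = g * (fst v / g) /\ snd v = g * (snd v / g) /\
                 prim D N' (nu v) /\ N = (g * g) * N').
  { intros [m s] Hv. destruct (Hin _ Hv) as [HvL Kv]. unfold key in Kv; simpl in Kv.
    assert (Hr := HR _ HvL). unfold rep in Hr; simpl in Hr.
    assert (Em : m = g * (m / g)).
    { apply Z.div_exact; [lia|]. apply Z.mod_divide; [lia|]. rewrite <- Kv. apply Z.gcd_divide_l. }
    assert (Es : s = g * (s / g)).
    { apply Z.div_exact; [lia|]. apply Z.mod_divide; [lia|]. rewrite <- Kv. apply Z.gcd_divide_r. }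
    assert (EN : N = (s / g * (s / g) + D * (m / g) * (m / g)) * (g * g)).
    { rewrite <- Hr. rewrite Es at 1 2. rewrite Em at 1 2. ring. }
    assert (EN' : N' = s / g * (s / g) + D * (m / g) * (m / g)).
    { unfold N'. rewrite EN at 1. apply Z.div_mul. nia. }
    simpl. split; [exact Em|]. split; [exact Es|]. split.
    - split.
      + unfold rep; simpl. symmetry; exact EN'.
      + apply Z.gcd_div_gcd; [lia|symmetry; exact Kv].
    - rewrite EN'. rewrite EN at 1. ring. }
  destruct (DEC v1 ltac:(rewrite EF; left; reflexivity)) as [_ [_ [_ EN]]].
  assert (HN' : 0 < N') by nia.
  assert (L1 : length F = length (map nu F)) by (rewrite length_map; reflexivity).
  rewrite L1.
  eapply Nat.le_trans.
  + apply (prim_count D N'); [exact HD|exact HN'| |].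
    * apply NoDup_map_inj'; [|exact HF].
      intros x y Hx Hy Exy. destruct (DEC x Hx) as [Ex1 [Ex2 _]]. destruct (DEC y Hy) as [Ey1 [Ey2 _]].
      unfold nu in Exy. injection Exy as A1 A2.
      destruct x as [x1 x2], y as [y1 y2]; simpl in *. rewrite Ex1, Ex2, Ey1, Ey2, A1, A2. reflexivity.
    * intros w Hw. apply in_map_iff in Hw as [v [<- Hv]]. apply (DEC v Hv).
  + apply Nat.mul_le_mono_l. assert (Hle : (length (divsZ N') <= length (divsZ N))%nat).
    { apply divsZ_incl; [exact HN|exact HN'|]. exists (g * g). rewrite EN. ring. }
    apply Nat.mul_le_mono; exact Hle.
Qed.


Lemma sq_lemma s s1 A A1 N : 0 <= A -> 0 <= A1 -> N = s * s + A -> N = s1 * s1 + A1 ->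
  16 * A * A <= N -> 16 * A1 * A1 <= N -> A < A1 -> False.
Proof.
intros H0 H1 E E1 S S1 Hlt.
set (a := Z.abs s). set (b := Z.abs s1).
assert (Ea : a * a = s * s) by (unfold a; nia).
assert (Eb : b * b = s1 * s1) by (unfold b; nia).
assert (Ha : 0 <= a) by (unfold a; lia). assert (Hb : 0 <= b) by (unfold b; lia).
assert (Hab : b < a) by nia.
assert (G : a <= A1 - A) by nia.
assert (G2 : a * a <= (A1 - A) * (A1 - A)) by nia.
assert (G3 : (A1 - A) * (A1 - A) <= A1 * A1) by nia.
assert (G4 : 15 * N <= 16 * A) by nia.
assert (N16 : 16 <= N) by nia.
destruct (Z.eq_dec A 0) as [->|HA]; [lia|].
nia.
Qed.

Definition small (D N : Z) (v : Z * Z) : bool := 16 * D * D * (fst v * fst v) * (fst v * fst v) <=? N.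

Lemma small_four D N L : 0 < D -> NoDup L -> (forall v, In v L -> rep D N v) ->
  (length (filter (small D N) L) <= 4)%nat.
Proof.
intros HD HL HR.
assert (HF : NoDup (filter (small D N) L)) by (apply NoDup_filter; exact HL).
assert (Hin : forall x, In x (filter (small D N) L) -> rep D N x /\ small D N x = true).
{ intros x Hx. apply filter_In in Hx as [Hx Hs]. auto. }
destruct (filter (small D N) L) as [|[m1 s1] rest] eqn:EF; [simpl; lia|].
change 4%nat with (length ((m1, s1) :: (m1, -s1) :: (-m1, s1) :: (-m1, -s1) :: nil)).
apply NoDup_incl_length; [exact HF|].
intros [m s] Hv.
destruct (Hin _ Hv) as [Rv Sv]. destruct (Hin (m1, s1) (or_introl eq_refl)) as [R1 S1].
unfold rep, small in *; cbn [fst snd] in *. apply Z.leb_le in Sv. apply Z.leb_le in S1.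
assert (EA : D * m * m = D * m1 * m1).
{ destruct (Z.lt_total (D * m * m) (D * m1 * m1)) as [h|[h|h]]; [exfalso| exact h |exfalso].
  - refine (sq_lemma s s1 (D * m * m) (D * m1 * m1) N _ _ _ _ _ _ h); nia.
  - refine (sq_lemma s1 s (D * m1 * m1) (D * m * m) N _ _ _ _ _ _ h); nia. }
assert (Em : m * m = m1 * m1) by nia.
assert (Es : s * s = s1 * s1) by nia.
assert (Em' : m = m1 \/ m = - m1) by nia.
assert (Es' : s = s1 \/ s = - s1) by nia.
destruct Em' as [-> | ->], Es' as [-> | ->]; simpl; tauto.
Qed.

Open Scope R_scope.

Lemma exp_le' a b : a <= b -> exp a <= exp b.
Proof. intros [h| ->]; [left; apply exp_increasing; exact h|right; reflexivity]. Qed.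

Lemma ln_le'' x y : 0 < x -> x <= y -> ln x <= ln y.
Proof. intros hx [h| ->]; [left; apply ln_increasing; assumption|right; reflexivity]. Qed.

Lemma absIZR_ge1 m : (m <> 0)%Z -> 1 <= Rabs (IZR m).
Proof. intros H. rewrite <- abs_IZR. apply IZR_le. lia. Qed.

Lemma term_le1 lam p : 0 < lam -> (fst p <> 0)%Z -> term lam p <= 1.
Proof.
intros hl hm. unfold term. set (x := Rabs (IZR (fst p))).
assert (hx : 1 <= x) by (apply absIZR_ge1; exact hm).
assert (hR : 1 <= Rpower x lam).
{ unfold Rpower. assert (0 <= ln x) by (rewrite <- ln_1; apply ln_le''; lra).
  assert (h := exp_ineq1_le (lam * ln x)). nra. }
rewrite <- Rinv_1. apply Rinv_le_contravar; lra.
Qed.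

Lemma term_le_M lam D N p : 0 < lam -> (0 < D)%Z -> (0 < N)%Z -> (fst p <> 0)%Z ->
  (N < 16 * D * D * (fst p * fst p) * (fst p * fst p))%Z ->
  term lam p <= exp (lam / 4 * (ln (IZR (16 * D * D)) - ln (IZR N))).
Proof.
intros hl hD hN hm hlt. unfold term, Rpower.
set (a := IZR (fst p)). set (x := Rabs a).
assert (hx : 1 <= x) by (apply absIZR_ge1; exact hm).
rewrite <- exp_Ropp. apply exp_le'.
assert (hxx : x * x = a * a).
{ unfold x. rewrite <- Rabs_mult. apply Rabs_pos_eq. nra. }
assert (hA : 0 < IZR (16 * D * D)) by (apply IZR_lt; nia).
assert (hNr : 0 < IZR N) by (apply IZR_lt; lia).
assert (hlt' : IZR N < IZR (16 * D * D) * (x * x * x * x)).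
{ replace (x * x * x * x) with ((x * x) * (x * x)) by ring. rewrite hxx.
  unfold a. rewrite <- !mult_IZR. apply IZR_lt. lia. }
assert (hln : ln (IZR N) < ln (IZR (16 * D * D)) + (ln x + ln x + ln x + ln x)).
{ rewrite <- !ln_mult; try lra; try (repeat apply Rmult_lt_0_compat; lra).
  apply ln_increasing; [lra|].
  exact hlt'. }
nra.
Qed.

Lemma sum_le lam D N M L : 0 < lam -> 0 <= M -> (forall p, In p L -> (fst p <> 0)%Z) ->
  (forall p, In p L -> small D N p = false -> term lam p <= M) ->
  sum_terms lam L <= INR (length (filter (small D N) L)) + INR (length L) * M.
Proof.
intros hl hM H0 H1. induction L as [|p L IH]; [simpl; lra|].
change (sum_terms lam (p :: L)) with (term lam p + sum_terms lam L).
change (length (p :: L)) with (S (length L)).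
assert (IH' : sum_terms lam L <= INR (length (filter (small D N) L)) + INR (length L) * M).
{ apply IH; intros q hq; [apply H0|apply H1]; right; exact hq. }
assert (t1 := term_le1 lam p hl (H0 p (or_introl eq_refl))).
rewrite S_INR.
cbn [filter]. destruct (small D N p) eqn:Es.
- change (length (p :: filter (small D N) L)) with (S (length (filter (small D N) L))).
  rewrite S_INR. nra.
- assert (t2 := H1 p (or_introl eq_refl) Es). nra.
Qed.

Lemma reps_sum lam D : 0 < lam -> (0 < D)%Z -> exists C, 0 <= C /\
  forall N L, NoDup L -> (forall v, In v L -> rep D N v /\ (fst v <> 0)%Z) -> sum_terms lam L <= C.
Proof.
intros hl hD.
set (eps := lam / 12).
assert (he : 0 < eps) by (unfold eps; lra).
destruct (divsZ_bound eps he) as [Bd [hB HB]].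
set (Kn := (Z.to_nat (8 * D + 1) * 2)%nat).
set (A := IZR (16 * D * D)).
set (C := 4 + INR Kn * (Bd * Bd * Bd) * exp (lam / 4 * ln A)).
assert (hK : 0 <= INR Kn) by apply pos_INR.
assert (hC0 : 0 <= INR Kn * (Bd * Bd * Bd) * exp (lam / 4 * ln A)).
{ apply Rmult_le_pos; [|left; apply exp_pos]. apply Rmult_le_pos; [exact hK|].
  repeat apply Rmult_le_pos; lra. }
exists C. split; [unfold C; lra|].
intros N L HL HV.
destruct L as [|v0 L0] eqn:EL; [unfold sum_terms; simpl; unfold C; lra|].
rewrite <- EL in *.
assert (hN : (0 < N)%Z).
{ destruct (HV v0 ltac:(rewrite EL; left; reflexivity)) as [Hr Hm]. unfold rep in Hr. nia. }
set (M := exp (lam / 4 * (ln A - ln (IZR N)))).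
assert (hM : 0 <= M) by (left; apply exp_pos).
assert (S1 := sum_le lam D N M L hl hM).
assert (S2 : sum_terms lam L <= INR (length (filter (small D N) L)) + INR (length L) * M).
{ apply S1.
  - intros p hp. apply (HV p hp).
  - intros p hp hs. apply term_le_M; try assumption.
    + apply (HV p hp).
    + unfold small in hs. apply Z.leb_gt in hs. exact hs. }
assert (S3 : INR (length (filter (small D N) L)) <= 4).
{ replace 4 with (INR 4) by (simpl; ring). apply le_INR.
  apply (small_four D N L); try assumption. intros v hv; apply (HV v hv). }
set (d := INR (length (divsZ N))).
assert (S4 : INR (length L) <= INR Kn * (d * d * d)).
{ unfold d. rewrite <- !mult_INR. apply le_INR. unfold Kn.
  assert (H := all_count D N L hD hN HL ltac:(intros v hv; apply (HV v hv))). lia. }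
set (E := Rpower (IZR N) eps).
assert (hd0 : 0 <= d) by apply pos_INR.
assert (S5 : d <= Bd * E) by (apply HB; exact hN).
assert (hE : 0 < E) by apply exp_pos.
assert (S6 : d * d * d <= (Bd * E) * (Bd * E) * (Bd * E)).
{ apply Rmult_le_compat; try nra. }
assert (S7 : E * E * E * M = exp (lam / 4 * ln A)).
{ unfold E, M, Rpower. rewrite <- !exp_plus. f_equal. unfold eps. field. }
assert (S8 : INR (length L) * M <= INR Kn * (Bd * Bd * Bd) * exp (lam / 4 * ln A)).
{ rewrite <- S7.
  apply Rle_trans with (INR Kn * (d * d * d) * M); [apply Rmult_le_compat_r; assumption|].
  replace (INR Kn * (Bd * Bd * Bd) * (E * E * E * M)) with (INR Kn * ((Bd * E) * (Bd * E) * (Bd * E)) * M) by ring.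
  apply Rmult_le_compat_r; [exact hM|]. apply Rmult_le_compat_l; assumption. }
unfold C. lra.
Qed.

Theorem mainTheorem6 :
  forall (lam : R) (Delta : Z), 0 < lam -> (Delta < 0)%Z ->
  exists C : R,
    forall a b c : Z, (0 < a)%Z -> (b*b - 4*a*c)%Z = Delta ->
    forall (k : Z) (l : list (Z * Z)),
      NoDup l -> (forall p, In p l -> inA a b c k p) ->
      sum_terms lam l <= C.
Proof.
intros lam Delta hl hDelta.
destruct (reps_sum lam (- Delta) hl ltac:(lia)) as [C [hC HC]].
exists C. intros a b c ha hdisc k l HND Hin.
assert (hbb : (0 <= b * b)%Z) by nia. assert (hac : (0 < a * c)%Z) by (rewrite <- Z.mul_assoc in hdisc; lia).
assert (hc : (0 < c)%Z) by (destruct (Z.lt_ge_cases 0 c); [assumption|nia]).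
set (f := fun p : Z * Z => (fst p, 2 * c * snd p + b * fst p)%Z).
assert (E : sum_terms lam (map f l) = sum_terms lam l).
{ clear -l. induction l as [|p l IH]; [reflexivity|].
  change (term lam (f p) + sum_terms lam (map f l) = term lam p + sum_terms lam l).
  rewrite IH. reflexivity. }
rewrite <- E. apply (HC (4 * c * k)%Z).
- apply NoDup_map_inj'; [|exact HND].
  intros [x1 x2] [y1 y2] _ _ Hxy.
  change ((x1, 2 * c * x2 + b * x1) = (y1, 2 * c * y2 + b * y1))%Z in Hxy.
  assert (H1 := f_equal fst Hxy). assert (H2 := f_equal snd Hxy).
  change (x1 = y1) in H1. change ((2 * c * x2 + b * x1) = (2 * c * y2 + b * y1))%Z in H2.
  subst y1. f_equal. apply Z.mul_reg_l with (2 * c)%Z; [lia|]. lia.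
- intros v hv. apply in_map_iff in hv as [[m n] [<- hp]].
  destruct (Hin _ hp) as [hm hq]. cbn [fst snd] in hm, hq. unfold qform in hq.
  split; [|exact hm]. unfold rep, f; cbn [fst snd]. subst Delta k. ring.
Qed.
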